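(* Let $m\ge3$ be odd and $n\ge2$. The set $\mathrm{SPSD}_{m,n}$ is a closed convex cone. Moreover, if $\mathcal{A},\mathcal{B}\in\mathrm{SPSD}_{3,n}$, then their Hadamard product $\mathcal{C}=\mathcal{A}\circ\mathcal{B}$ (entrywise product, $c_{ijk}=a_{ijk}b_{ijk}$) belongs to $\mathrm{SPSD}_{3,n}$; and if $\mathcal{A},\mathcal{B}\in\mathrm{SPD}_{3,n}$, then $\mathcal{C}\in\mathrm{SPD}_{3,n}$.
   Context: For a symmetric $m$th order $n$-dimensional real tensor $\mathcal{A}$ and $\mathbf{x}\in\mathbb{R}^n$, $\mathcal{A}\mathbf{x}^{m-1}$ is the vector with $i$th component $\sum_{i_2,\dots,i_m}a_{ii_2\dots i_m}x_{i_2}\cdots x_{i_m}$. For odd $m$, $\mathrm{SPSD}_{m,n}$ is the set of real symmetric $m$th order $n$-dimensional tensors $\mathcal{A}$ with $\mathcal{A}\mathbf{x}^{m-1}\ge\mathbf{0}$ componentwise for all $\mathbf{x}\in\mathbb{R}^n$ (strongly positive semi-definite tensors), and $\mathrm{SPD}_{m,n}$ is the set of those with $\mathcal{A}\mathbf{x}^{m-1}>\mathbf{0}$ componentwise for all nonzero $\mathbf{x}$ (strongly positive definite tensors). *)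

(* Defs.v *)
From HB Require Import structures.
From mathcomp Require Import all_boot all_order all_algebra all_fingroup.
From mathcomp Require Import all_classical all_reals all_analysis.
Set Implicit Arguments. Unset Strict Implicit. Unset Printing Implicit Defensive.
Import Order.TTheory GRing.Theory Num.Theory.
Import numFieldNormedType.Exports.
Local Open Scope ring_scope.

(* Closedness is taken in the pointwise (= product) topology {ptws T -> R}, which
   (finite index set) is the Euclidean topology on R^(n^m). *)
Notation tensor R m n := ({ffun 'I_m -> 'I_n} -> R) (only parsing).

Definition symmetric_tensor (R : realType) (m n : nat) (A : tensor R m n) :=
  forall (s : 'S_m) (f : {ffun 'I_m -> 'I_n}), A [ffun k => f (s k)] = A f.

(* (A x^{m-1})_i = sum_{i_2..i_m} a_{i i_2 .. i_m} x_{i_2} ... x_{i_m}: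
   sum over all index functions whose first index (position 0) is i. *)
Definition tvec (R : realType) (m n : nat) (A : tensor R m n) (x : 'I_n -> R)
  (i : 'I_n) : R :=
  \sum_(f : {ffun 'I_m -> 'I_n} | [forall k : 'I_m, (val k == 0%N) ==> (f k == i)])
     A f * \prod_(k : 'I_m | val k != 0%N) x (f k).

Definition SPSD (R : realType) (m n : nat) : set (tensor R m n) :=
  [set A | symmetric_tensor A /\ forall (x : 'I_n -> R) (i : 'I_n), 0 <= tvec A x i].

Definition SPD (R : realType) (m n : nat) : set (tensor R m n) :=
  [set A | symmetric_tensor A /\
     forall (x : 'I_n -> R), x != (fun _ => 0) -> forall i : 'I_n, 0 < tvec A x i].

Definition hadamard (R : realType) (m n : nat) (A B : tensor R m n) : tensor R m n :=
  fun f => A f * B f.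
Arguments SPSD : clear implicits.
Arguments SPD : clear implicits.

(* Main.v *)
Require Import Defs.
From HB Require Import structures.
From mathcomp Require Import all_boot all_order all_algebra all_fingroup.
From mathcomp Require Import all_classical all_reals all_analysis.
From mathcomp Require Import ring lra.
Import Order.TTheory GRing.Theory Num.Theory.
Import numFieldNormedType.Exports.
Local Open Scope ring_scope.

Section Quad.
Variables (R : realType) (n : nat).
Implicit Types (B : 'I_n -> 'I_n -> R) (y : 'I_n -> R).

Definition qf B y := \sum_j \sum_l B j l * (y j * y l).
Definition delta (p : 'I_n) (t : R) := fun k : 'I_n => if k == p then t else 0.
Definition symm B := forall j l, B j l = B l j.
Definition psd B := forall y, 0 <= qf B y.

Lemma sum_delta (F : 'I_n -> R) p t : \sum_k F k * delta p t k = F p * t.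
Proof.
rewrite (bigD1 p) // /delta eqxx big1; first exact: addr0.
by move=> k hk; rewrite (negbTE hk) mulr0.
Qed.

Lemma sum_delta_l (F : 'I_n -> R) p t : \sum_k delta p t k * F k = t * F p.
Proof.
rewrite (eq_bigr (fun k => F k * delta p t k)); first by rewrite sum_delta mulrC.
by move=> k _; rewrite mulrC.
Qed.

Lemma qf_delta B p t : qf B (delta p t) = t ^+ 2 * B p p.
Proof.
rewrite /qf (eq_bigr (fun j => delta p t j * (\sum_l B j l * delta p t l))).
  rewrite sum_delta_l sum_delta; ring.
move=> j _; rewrite mulr_sumr; apply: eq_bigr => l _; ring.
Qed.

Lemma qf_shift B y p t : symm B ->
  qf B (fun k => y k + delta p t k) =
  qf B y + 2 * t * (\sum_j B p j * y j) + t ^+ 2 * B p p.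
Proof.
move=> sB.
have E : qf B (fun k => y k + delta p t k) =
  qf B y + (\sum_j \sum_l B j l * (y j * delta p t l))
         + (\sum_j \sum_l B j l * (delta p t j * y l)) + qf B (delta p t).
  rewrite /qf -!big_split; apply: eq_bigr => j _; rewrite -!big_split; cbv beta.
  apply: eq_bigr => l _. Timeout 20 rewrite /=. ring.
rewrite E qf_delta.
have -> : \sum_j \sum_l B j l * (y j * delta p t l) = t * \sum_j B p j * y j.
  rewrite mulr_sumr; apply: eq_bigr => j _.
  rewrite (eq_bigr (fun l => (B j l * y j) * delta p t l)); last by move=> l _; ring.
  by rewrite sum_delta (sB j p); ring.
have -> : \sum_j \sum_l B j l * (delta p t j * y l) = t * \sum_j B p j * y j.
  rewrite (eq_bigr (fun j => delta p t j * (\sum_l B j l * y l))).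
    by rewrite sum_delta_l.
  by move=> j _; rewrite mulr_sumr; apply: eq_bigr => l _; ring.
ring.
Qed.

Lemma diag_ge0 B : psd B -> forall j, 0 <= B j j.
Proof. by move=> hB j; have := hB (delta j 1); rewrite qf_delta expr1n mul1r. Qed.

Lemma psd_row0 B p : symm B -> psd B -> B p p = 0 -> forall j, B p j = 0.
Proof.
move=> sB hB hpp j; have [->//|hjp] := eqVneq j p.
set b := B p j; set c := B j j.
have H t : 0 <= 2 * t * b + c.
  have := hB (fun k => delta j 1 k + delta p t k).
  rewrite qf_shift // qf_delta hpp mulr0 addr0 expr1n mul1r sum_delta mulr1.
  by rewrite addrC.
apply/eqP; apply/negPn/negP => hb.
have := H (- (c + 1) / (2 * b)).
have -> : 2 * (- (c + 1) / (2 * b)) * b + c = -1.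
  by field.
by move=> h; lra.
Qed.

Lemma decomp_aux N : forall S : {set 'I_n}, (#|S| <= N)%N -> forall B, symm B -> psd B ->
  (forall j l, j \notin S -> B j l = 0) ->
  exists s : seq ('I_n -> R), forall j l, B j l = \sum_(v <- s) v j * v l.
Proof.
elim: N => [|N IH] S hS B sB hB supp.
  move: hS; rewrite leqn0 => /eqP/cards0_eq S0.
  by exists [::] => j l; rewrite big_nil supp // S0 inE.
have [S0|/set0Pn [p pS]] := eqVneq S finset.set0.
  by exists [::] => j l; rewrite big_nil supp // S0 inE.
have hS' : (#|S :\ p| <= N)%N.
  by move: hS; rewrite (cardsD1 p S) pS add1n ltnS.
have [hpp|hpp] := eqVneq (B p p) 0.
  have r0 := @psd_row0 B p sB hB hpp.
  apply: (IH _ hS') => // j l; rewrite in_setD1 negb_and negbK.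
  case/orP => [/eqP ->|]; [exact: r0 | exact: supp].
have dpos : 0 < B p p by rewrite lt_def hpp diag_ge0.
set d := B p p.
pose B' := fun j l => B j l - B p j * B p l / d.
have sB' : symm B' by move=> j l; rewrite /B' sB; congr (_ - _); ring.
have hB' : psd B'.
  move=> y; set w := \sum_j B p j * y j.
  have -> : qf B' y = qf B (fun k => y k + delta p (- (w / d)) k).
    rewrite qf_shift //.
    have -> : qf B' y = qf B y - w * w / d.
      have -> : w * w / d = \sum_j \sum_l (B p j * y j) * (B p l * y l) / d.
        rewrite /w mulr_suml mulr_suml; apply: eq_bigr => j _.
        by rewrite mulr_sumr mulr_suml; apply: eq_bigr => l _.
      rewrite /qf -sumrB; apply: eq_bigr => j _; rewrite -sumrB; apply: eq_bigr => l _.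
      rewrite /B'; ring.
    rewrite -/w -/d; field; exact: hpp.
  exact: hB.
have supp' : forall j l, j \notin S :\ p -> B' j l = 0.
  move=> j l; rewrite in_setD1 negb_and negbK /B'; case/orP => [/eqP ->|hj].
    rewrite -/d; field; exact: hpp.
  by rewrite supp // (sB p j) supp // mul0r mul0r subr0.
have [s hs] := IH _ hS' B' sB' hB' supp'.
exists ((fun k => B p k / Num.sqrt d) :: s) => j l.
rewrite big_cons -hs /B'.
have sq : Num.sqrt d ^+ 2 = d by rewrite sqr_sqrtr // ltW.
have sq0 : Num.sqrt d != 0 by rewrite sqrtr_eq0 -ltNge.
rewrite -{3}sq; field; exact: sq0.
Qed.

Lemma decomp B : symm B -> psd B ->
  exists s : seq ('I_n -> R), forall j l, B j l = \sum_(v <- s) v j * v l.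
Proof.
move=> sB hB; apply: (@decomp_aux #|[set: 'I_n]| [set: 'I_n]) => // j l.
by rewrite inE.
Qed.

Definition had B C := fun j l => B j l * C j l.

Lemma had_qf A B s : (forall j l, B j l = \sum_(v <- s) v j * v l) ->
  forall x, qf (had A B) x = \sum_(v <- s) qf A (fun k => x k * v k).
Proof.
move=> hs x; rewrite /qf /had.
transitivity (\sum_j \sum_l \sum_(v <- s) A j l * (x j * v j * (x l * v l))).
  apply: eq_bigr => j _; apply: eq_bigr => l _.
  rewrite hs mulr_sumr mulr_suml; apply: eq_bigr => v _; ring.
rewrite [RHS]exchange_big; apply: eq_bigr => j _.
by rewrite exchange_big.
Qed.

Lemma schur_psd A B : psd A -> symm B -> psd B -> psd (had A B).
Proof.
move=> hA sB hB x; have [s hs] := @decomp B sB hB.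
by rewrite (@had_qf A B s hs); apply: sumr_ge0 => v _; exact: hA.
Qed.

Lemma sum_pos_seq (T : Type) (s : seq T) (F G : T -> R) :
  (forall a, 0 <= F a) -> (forall a, 0 <= G a) -> (forall a, 0 < G a -> 0 < F a) ->
  0 < \sum_(a <- s) G a -> 0 < \sum_(a <- s) F a.
Proof.
move=> F0 G0 FG; elim: s => [|a s IH]; first by rewrite big_nil ltxx.
rewrite !big_cons => h.
have [Ga|Ga] := boolP (0 < G a).
  by apply: ltr_wpDr; [apply: sumr_ge0 => b _; exact: F0 | exact: FG].
have Ga0 : G a = 0 by apply/eqP; rewrite eq_le G0 andbT leNgt.
rewrite Ga0 add0r in h.
by apply: ltr_wpDl; [exact: F0 | exact: IH].
Qed.

Lemma schur_pd A B : psd A -> (forall y, y != (fun _ => 0) -> 0 < qf A y) ->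
  symm B -> psd B -> (forall j, 0 < B j j) ->
  forall x, x != (fun _ => 0) -> 0 < qf (had A B) x.
Proof.
move=> hA pA sB hB dB x hx; have [s hs] := @decomp B sB hB.
have [j xj] : exists j, x j != 0.
  case: (pselect (exists j, x j != 0)) => // H; exfalso; move/negP: hx; apply.
  apply/eqP/funext => k; apply/eqP/negPn/negP => hk; apply: H; by exists k.
rewrite (@had_qf A B s hs).
apply: (@sum_pos_seq _ s _ (fun v => v j * v j)).
- by move=> v; exact: hA.
- by move=> v; rewrite -expr2 sqr_ge0.
- move=> v hv; apply: pA; apply/eqP => /(congr1 (fun g => g j)); cbv beta => /eqP.
  rewrite mulf_eq0 (negbTE xj) orFb; apply/negP.
  by apply: contraTN hv => /eqP ->; rewrite mul0r ltxx.
- by rewrite -hs.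
Qed.

End Quad.
Arguments qf {R n}. Arguments delta {R n}. Arguments symm {R n}. Arguments psd {R n}.
Arguments had {R n}. Arguments qf_delta {R n}. Arguments schur_psd {R n}. Arguments schur_pd {R n}.


Section Tens.
Variables (R : realType) (n : nat).
Definition o1 : 'I_3 := @Ordinal 3 1 isT.
Definition o2 : 'I_3 := @Ordinal 3 2 isT.
Definition mk (i j l : 'I_n) : {ffun 'I_3 -> 'I_n} :=
  [ffun k : 'I_3 => if val k == 0%N then i else if val k == 1%N then j else l].
Definition slice (A : {ffun 'I_3 -> 'I_n} -> R) i := fun j l => A (mk i j l).

Lemma prod3 (x : 'I_n -> R) i j l :
  \prod_(k : 'I_3 | val k != 0%N) x (mk i j l k) = x j * x l.
Proof.
rewrite big_mkcond !big_ord_recl big_ord0 !ffunE /=.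
by rewrite mul1r mulr1.
Qed.

Lemma mk_eta (f : {ffun 'I_3 -> 'I_n}) i : f ord0 = i -> mk i (f o1) (f o2) = f.
Proof.
move=> hi; apply/ffunP => -[[|[|[|k]]] hk]; rewrite ffunE //=.
- by rewrite -hi; congr (f _); apply: val_inj.
- by congr (f _); apply: val_inj.
- by congr (f _); apply: val_inj.
Qed.

Lemma tvec3 (A : {ffun 'I_3 -> 'I_n} -> R) x i : tvec A x i = qf (slice A i) x.
Proof.
rewrite /tvec /qf pair_bigA.
rewrite (reindex_onto (fun p : 'I_n * 'I_n => mk i p.1 p.2) (fun f => (f o1, f o2))).
  apply: eq_big => [[j l]|[j l] _].
    apply/andP; split; last by rewrite /= !ffunE.
    apply/forallP => k; apply/implyP => /eqP hk; by rewrite ffunE hk /= eqxx.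
  by rewrite prod3.
move=> f hf; apply: mk_eta.
by have := forallP hf ord0; move/implyP/(_ isT)/eqP.
Qed.

Lemma slice_symm (A : {ffun 'I_3 -> 'I_n} -> R) i :
  symmetric_tensor A -> symm (slice A i).
Proof.
move=> sA j l; rewrite /slice -(sA (tperm o1 o2) (mk i j l)); congr A.
apply/ffunP => k; rewrite !ffunE.
have : k = ord0 \/ k = o1 \/ k = o2.
  by case: k => -[|[|[|k]]] hk; [left|right;left|right;right|]; try apply: val_inj.
case=> [->|[->|->]]; first by rewrite tpermD.
  by rewrite tpermL.
by rewrite tpermR.
Qed.
End Tens.
Arguments slice {R n}. Arguments tvec3 {R n}. Arguments slice_symm {R n}.


Section Main.
Variable R : realType.

Lemma tvec_add m n (A B : {ffun 'I_m -> 'I_n} -> R) x i :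
  tvec (fun f => A f + B f) x i = tvec A x i + tvec B x i.
Proof. by rewrite /tvec -big_split; apply: eq_bigr => f _; rewrite mulrDl. Qed.

Lemma tvec_scale m n c (A : {ffun 'I_m -> 'I_n} -> R) x i :
  tvec (fun f => c * A f) x i = c * tvec A x i.
Proof. by rewrite /tvec mulr_sumr; apply: eq_bigr => f _; rewrite mulrA. Qed.

Lemma eval_cont m n (f : {ffun 'I_m -> 'I_n}) :
  continuous (fun A : {ptws {ffun 'I_m -> 'I_n} -> R} => A f).
Proof. exact: (@proj_continuous _ (fun _ => R) f). Qed.

Lemma tvec_cont m n x i :
  continuous (fun A : {ptws {ffun 'I_m -> 'I_n} -> R} => tvec A x i).
Proof.
rewrite /tvec.
apply: (@continuous_big _ _ +%R 0 _ add_continuous).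
move=> f _ A.
set c := \prod_(k | _) _.
have h := @cvgMr_tmp R _ (nbhs A) _ (fun B : {ptws {ffun 'I_m -> 'I_n} -> R} => B f) (A f) c (@eval_cont m n f A).
Timeout 20 exact: h.
Qed.
Lemma SPSD_closed m n : @closed {ptws {ffun 'I_m -> 'I_n} -> R} (SPSD R m n).
Proof.
pose T := {ptws {ffun 'I_m -> 'I_n} -> R}.
have -> : SPSD R m n = setI
  (\bigcap_(p in [set: 'S_m * {ffun 'I_m -> 'I_n}]%classic)
     [set A : T | A [ffun k => p.2 (p.1 k)] - A p.2 = 0]%classic)
  (\bigcap_(q in [set: ('I_n -> R) * 'I_n]%classic) [set A : T | 0 <= tvec A q.1 q.2]%classic).
  apply/seteqP; split => A.
    case=> sA pA; split => [[s f] _ | [x i] _]; last exact: pA.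
    by apply/eqP; rewrite subr_eq0; apply/eqP; exact: sA.
  case=> h1 h2; split => [s f | x i]; last exact: (h2 (x, i) I).
  by apply/eqP; rewrite -subr_eq0; apply/eqP; exact: (h1 (s, f) I).
apply: closedI; apply: closed_bigI => p _.
  apply: (@preimage_closed T R (fun A : T => A [ffun k => p.2 (p.1 k)] - A p.2) [set 0]%classic); last exact: closed_eq.
  move=> A _.
  have h := @cvgB R R T (nbhs A) _ (fun B : T => B [ffun k => p.2 (p.1 k)]) (fun B : T => B p.2) _ _ (@eval_cont m n _ A) (@eval_cont m n _ A).
  Timeout 20 exact: h.
apply: (@preimage_closed T R (fun A : T => tvec A p.1 p.2) [set z | 0 <= z]%classic); last exact: closed_ge.
move=> A _; exact: tvec_cont.
Qed.
End Main.


Lemma qf0 (R : realType) n (B : 'I_n -> 'I_n -> R) : qf B (fun _ => 0) = 0.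
Proof. rewrite /qf big1 // => j _; rewrite big1 // => l _; by rewrite mul0r mulr0. Qed.

Lemma spd_slice (R : realType) n (A : {ffun 'I_3 -> 'I_n} -> R) i :
  SPD R 3 n A -> psd (slice A i) /\
    (forall y, y != (fun _ => 0) -> 0 < qf (slice A i) y) /\
    (forall j, 0 < slice A i j j).
Proof.
case=> _ hA; split; [|split].
- move=> y; have [->|hy] := eqVneq y (fun _ => 0); first by rewrite qf0.
  by apply: ltW; rewrite -tvec3; exact: hA.
- by move=> y hy; rewrite -tvec3; exact: hA.
- move=> j; have hd : delta j (1 : R) != (fun _ => 0).
    apply/eqP => /(congr1 (fun g => g j)); rewrite /delta eqxx => /eqP.
    by rewrite oner_eq0.
  by have := hA _ hd i; rewrite tvec3 qf_delta expr1n mul1r.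
Qed.

Theorem theorem3p9 (R : realType) :
  (forall m n : nat, odd m -> (3 <= m)%N -> (2 <= n)%N ->
     @closed {ptws {ffun 'I_m -> 'I_n} -> R} (SPSD R m n) /\
     (forall A B : tensor R m n, SPSD R m n A -> SPSD R m n B ->
        SPSD R m n (fun f => A f + B f)) /\
     (forall (c : R) (A : tensor R m n), 0 <= c -> SPSD R m n A ->
        SPSD R m n (fun f => c * A f))) /\
  (forall n : nat, (2 <= n)%N ->
     (forall A B : tensor R 3 n, SPSD R 3 n A -> SPSD R 3 n B ->
        SPSD R 3 n (hadamard A B)) /\
     (forall A B : tensor R 3 n, SPD R 3 n A -> SPD R 3 n B ->
        SPD R 3 n (hadamard A B))).
Proof.
split.
  move=> m n _ _ _; split; first exact: SPSD_closed.
  split.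
    move=> A B [sA pA] [sB pB]; split.
      by move=> s f; rewrite sA sB.
    by move=> x i; rewrite tvec_add; apply: addr_ge0.
  move=> c A c0 [sA pA]; split.
    by move=> s f; rewrite sA.
  by move=> x i; rewrite tvec_scale; apply: mulr_ge0.
move=> n _; split.
  move=> A B [sA pA] [sB pB]; split.
    by move=> s f; rewrite /hadamard sA sB.
  move=> x i; rewrite tvec3.
  apply: (schur_psd (slice A i) (slice B i)).
  - by move=> y; rewrite -tvec3.
  - exact: slice_symm.
  - by move=> y; rewrite -tvec3.
move=> A B hA hB; split.
  by move=> s f; rewrite /hadamard hA.1 hB.1.
move=> x hx i; rewrite tvec3.
have [pA [qA _]] := @spd_slice R n A i hA.
have [pB [_ dB]] := @spd_slice R n B i hB.
exact: (schur_pd (slice A i) (slice B i) pA qA (slice_symm B i hB.1) pB dB x hx).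
Qed.
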